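(* Let $\mathcal{L}$ be a set closed under a binary connective $\wedge$ and a unary connective $\neg$, and let $\langle \mathcal{M}, \models, f\rangle$ be a restricted fC-model for $\mathcal{L}$ that behaves classically with respect to $\wedge$ and $\neg$, i.e. for every $m \in \mathcal{M}$ and $a, b \in \mathcal{L}$: $m \models a\wedge b$ iff ($m \models a$ and $m \models b$), and $m \models \neg a$ iff $m \not\models a$. Let $\mathcal{C}(A) = \overline{f(\widehat{A})}$ for $A \subseteq \mathcal{L}$. Then for all $A \subseteq \mathcal{L}$ and $a, b \in \mathcal{L}$: ($\wedge$-R) $\mathcal{C}(A \cup \{a\wedge b\}) = \mathcal{C}(A \cup \{a, b\})$; ($\neg$-R1) $\mathcal{C}(A \cup \{a, \neg a\}) = \mathcal{L}$; ($\neg$-R2) if $\mathcal{C}(A \cup \{\neg a\}) = \mathcal{L}$ then $a \in \mathcal{C}(A)$.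
   Context: An fC-model for $\mathcal{L}$ is a triple $\langle \mathcal{M}, \models, f\rangle$ where $\mathcal{M}$ is any set, $\models \subseteq \mathcal{M}\times\mathcal{L}$ is a binary relation, and $f: 2^{\mathcal{M}} \to 2^{\mathcal{M}}$ is defined on all subsets of $\mathcal{M}$ and satisfies, for all $X, Y \subseteq \mathcal{M}$: Contraction $f(X) \subseteq X$, and Local Cumulativity $f(X) \subseteq Y \subseteq X \Rightarrow f(Y) = f(X)$. It is restricted if also $f(X) = \emptyset \Rightarrow X = \emptyset$. For $A \subseteq \mathcal{L}$, $\widehat{A} = \{x \in \mathcal{M} : x \models a\ \forall a \in A\}$; for $X \subseteq \mathcal{M}$, $\overline{X} = \{a \in \mathcal{L} : x \models a\ \forall x \in X\}$. *)

(* Defs.v *)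
Set Implicit Arguments.

Definition subset {T : Type} (X Y : T -> Prop) : Prop := forall x, X x -> Y x.
Definition set_eq {T : Type} (X Y : T -> Prop) : Prop := forall x, X x <-> Y x.
Definition is_empty {T : Type} (X : T -> Prop) : Prop := forall x, ~ X x.

Record fC_model (L M : Type) := {
  sat : M -> L -> Prop;
  fsel : (M -> Prop) -> (M -> Prop);
  contraction : forall X, subset (fsel X) X;
  local_cumulativity : forall X Y,
      subset (fsel X) Y -> subset Y X -> set_eq (fsel Y) (fsel X)
}.

Definition restricted {L M : Type} (m : fC_model L M) : Prop :=
  forall X, is_empty (fsel m X) -> is_empty X.

Definition hat {L M : Type} (m : fC_model L M) (A : L -> Prop) : M -> Prop :=
  fun x => forall a, A a -> sat m x a.

Definition bar {L M : Type} (m : fC_model L M) (X : M -> Prop) : L -> Prop :=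
  fun a => forall x, X x -> sat m x a.

Definition Cn {L M : Type} (m : fC_model L M) (A : L -> Prop) : L -> Prop :=
  bar m (fsel m (hat m A)).

Definition setU {T : Type} (X Y : T -> Prop) : T -> Prop := fun x => X x \/ Y x.
Definition set1 {T : Type} (a : T) : T -> Prop := fun x => x = a.
Definition set2 {T : Type} (a b : T) : T -> Prop := fun x => x = a \/ x = b.
Definition setT {T : Type} : T -> Prop := fun _ => True.

(* Main.v *)
Require Import Defs.
From Stdlib Require Import Classical.

Lemma fsel_ext (L M : Type) (m : fC_model L M) X Y :
  set_eq X Y -> set_eq (fsel m X) (fsel m Y).
Proof.
  intros H. apply (local_cumulativity m).
  - intros x Hx. apply H. apply (contraction m Y x Hx).
  - intros x Hx. apply H. exact Hx.
Qed.

Theorem theorem3 (L M : Type) (conj : L -> L -> L) (neg : L -> L)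
  (m : fC_model L M) (Hres : restricted m)
  (Hconj : forall x a b, sat m x (conj a b) <-> (sat m x a /\ sat m x b))
  (Hneg : forall x a, sat m x (neg a) <-> ~ sat m x a) :
  forall (A : L -> Prop) (a b : L),
    set_eq (Cn m (setU A (set1 (conj a b)))) (Cn m (setU A (set2 a b))) /\
    set_eq (Cn m (setU A (set2 a (neg a)))) setT /\
    (set_eq (Cn m (setU A (set1 (neg a)))) setT -> Cn m A a).
Proof.
  intros A a b. split; [|split].
  - assert (E : set_eq (hat m (setU A (set1 (conj a b)))) (hat m (setU A (set2 a b)))).
    { intros x; unfold hat, setU, set1, set2; split; intros H c Hc.
      - assert (Hab := proj1 (Hconj x a b) (H _ (or_intror eq_refl))).
        destruct Hc as [Hc|[->| ->]]; [now apply H; left| |]; apply Hab.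
      - destruct Hc as [Hc| ->]; [now apply H; left|].
        apply (proj2 (Hconj x a b)); split; apply H; right; auto. }
    pose proof (@fsel_ext L M m _ _ E) as F.
    intros c; unfold Cn, bar; split; intros H x Hx; apply H, F, Hx.
  - intros c; unfold Cn, bar, setT; split; [auto|]. intros _ x Hx.
    apply (contraction m) in Hx. unfold hat, setU, set2 in Hx.
    exfalso. assert (Ha := Hx a (or_intror (or_introl eq_refl))).
    assert (Hn := Hx (neg a) (or_intror (or_intror eq_refl))).
    apply (proj1 (Hneg x a)) in Hn. auto.
  - intros H. unfold Cn, bar. intros x Hx.
    apply (contraction m) in Hx.
    apply NNPP; intros Hna.
    assert (Emp : is_empty (fsel m (hat m (setU A (set1 (neg a)))))).
    { intros y Hy.
      assert (Hy1 := proj2 (H (neg a)) I y Hy).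
      assert (Hy2 := proj2 (H a) I y Hy).
      apply (proj1 (Hneg y a)) in Hy1. auto. }
    apply (Hres _ Emp x).
    intros c [Hc| ->]; [now apply Hx|]. apply (proj2 (Hneg x a)); exact Hna.
Qed.
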